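(* Let $(E\to M,\rho,\langle\cdot,\cdot\rangle,\circ)$ be a Courant algebroid and let $\mathbf I,\mathbf J$ be vector bundle endomorphisms of $E$ over $\mathrm{id}_M$ such that $\mathbf I^2=\mathbf J^2=-1$, $\mathbf I\mathbf J=-\mathbf J\mathbf I$, both $\mathbf I$ and $\mathbf J$ are orthogonal for $\langle\cdot,\cdot\rangle$, and $N_{\mathbf I,\mathbf I}=N_{\mathbf J,\mathbf J}=N_{\mathbf I,\mathbf J}=0$. Then $(\mathbf I,\mathbf J,\mathbf I\mathbf J)$ is a hypercomplex structure on $E$.
   Context: A Courant algebroid $(E\to M,\rho,\langle\cdot,\cdot\rangle,\circ)$ consists of a real vector bundle $E\to M$ over a smooth manifold, a nondegenerate symmetric fiberwise bilinear pairing $\langle\cdot,\cdot\rangle$ on $E$, a vector bundle map $\rho:E\to TM$ (the anchor), and an $\mathbb R$-bilinear operation $\circ$ on $\Gamma(E)$ (the Dorfman bracket) such that for all $f\in C^\infty(M)$, $x,y,z\in\Gamma(E)$: $x\circ(y\circ z)=(x\circ y)\circ z+y\circ(x\circ z)$; $\rho(x\circ y)=[\rho(x),\rho(y)]$; $x\circ(fy)=(\rho(x)f)y+f(x\circ y)$; $x\circ y+y\circ x=2D\langle x,y\rangle$; $(Df)\circ x=0$; $\rho(x)\langle y,z\rangle=\langle x\circ y,z\rangle+\langle y,x\circ z\rangle$. Here $D:C^\infty(M)\to\Gamma(E)$ is the $\mathbb R$-linear map defined by $\langle Df,x\rangle=\tfrac12\rho(x)f$. For vector bundle endomorphisms $F,G$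 of $E$ (over $\mathrm{id}_M$), the Nijenhuis concomitant is the tensor $N_{F,G}:E\otimes E\to E$ given by $N_{F,G}(X,Y)=FX\circ GY-F(X\circ GY)-G(FX\circ Y)+FG(X\circ Y)+GX\circ FY-G(X\circ FY)-F(GX\circ Y)+GF(X\circ Y)$. An almost hypercomplex structure on $E$ is a triple $(\mathbf I,\mathbf J,\mathbf K)$ of vector bundle endomorphisms of $E$ over $\mathrm{id}_M$, each orthogonal for $\langle\cdot,\cdot\rangle$, with $\mathbf I^2=\mathbf J^2=\mathbf K^2=\mathbf I\mathbf J\mathbf K=-1$. It is a hypercomplex structure if $N_{\mathbf I,\mathbf I},N_{\mathbf J,\mathbf J},N_{\mathbf K,\mathbf K},N_{\mathbf I,\mathbf J},N_{\mathbf J,\mathbf K},N_{\mathbf K,\mathbf I}$ all vanish. *)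

(* Defs.v *)
From HB Require Import structures.
From mathcomp Require Import all_boot all_order all_algebra.
Set Implicit Arguments. Unset Strict Implicit. Unset Printing Implicit Defensive.
Import Order.TTheory GRing.Theory Num.Theory.
Local Open Scope ring_scope.

(* R      : the real scalars (any real field),
   C      : the commutative R-algebra of smooth functions C^oo(M),
   V      : the C-module of sections Gamma(E).
   A Courant algebroid is given at the level of sections by:
   anchor rho : V -> (C -> C) (each rho x is a vector field = R-derivation of C),
   pairing  <.,.> : V -> V -> C (C-bilinear, symmetric, nondegenerate),
   Dorfman bracket  o : V -> V -> V (R-bilinear),
   D : C -> V  with <Df, x> = 1/2 rho(x) f. *)
Record courant_data (R : realFieldType) (C : comAlgType R) (V : lmodType C) := CourantData {
  anchor : V -> C -> C;
  pairing : V -> V -> C;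
  dorf : V -> V -> V;
  Dop : C -> V
}.

Section Defs.
Variables (R : realFieldType) (C : comAlgType R) (V : lmodType C).
Variable c : courant_data V.

Local Notation rho := (anchor c).
Local Notation pr := (pairing c).
Local Notation "x <o> y" := (dorf c x y) (at level 40, left associativity).
Local Notation D := (Dop c).

Definition vf_bracket (X Y : C -> C) : C -> C := fun f => X (Y f) - Y (X f).

Definition courant_axioms : Prop :=
  (forall (f : C) x y g, rho (f *: x + y) g = f * rho x g + rho y g) /\
  (forall x (r : R) g h, rho x (r *: g + h) = r *: rho x g + rho x h) /\
  (forall x g h, rho x (g * h) = rho x g * h + g * rho x h) /\
  (forall (f : C) x y z, pr (f *: x + y) z = f * pr x z + pr y z) /\
  (forall x y, pr x y = pr y x) /\
  (forall x, (forall y, pr x y = 0) -> x = 0) /\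
  (forall (r : R) x y z, (r%:A *: x + y) <o> z = r%:A *: (x <o> z) + y <o> z) /\
  (forall (r : R) x y z, x <o> (r%:A *: y + z) = r%:A *: (x <o> y) + x <o> z) /\
  (forall f x, pr (D f) x = (2%:R : R)^-1 *: rho x f) /\
  (forall x y z, x <o> (y <o> z) = (x <o> y) <o> z + y <o> (x <o> z)) /\
  (forall x y, rho (x <o> y) =1 vf_bracket (rho x) (rho y)) /\
  (forall (f : C) x y, x <o> (f *: y) = rho x f *: y + f *: (x <o> y)) /\
  (forall x y, x <o> y + y <o> x = D (pr x y) *+ 2) /\
  (forall f x, D f <o> x = 0) /\
  (forall x y z, rho x (pr y z) = pr (x <o> y) z + pr y (x <o> z)).

(* vector bundle endomorphisms of E over id_M = C-linear maps of sections *)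
Definition bundle_endo (F : V -> V) : Prop :=
  forall (f : C) x y, F (f *: x + y) = f *: F x + F y.

Definition ca_orthogonal (F : V -> V) : Prop := forall x y, pr (F x) (F y) = pr x y.

Definition nijenhuis (F G : V -> V) (X Y : V) : V :=
  F X <o> G Y - F (X <o> G Y) - G (F X <o> Y) + F (G (X <o> Y))
  + G X <o> F Y - G (X <o> F Y) - F (G X <o> Y) + G (F (X <o> Y)).

Definition nij_zero (F G : V -> V) : Prop := forall X Y, nijenhuis F G X Y = 0.

Definition almost_hypercomplex (I J K : V -> V) : Prop :=
  [/\ [/\ bundle_endo I, bundle_endo J & bundle_endo K],
      [/\ ca_orthogonal I, ca_orthogonal J & ca_orthogonal K] &
      [/\ (forall x, I (I x) = - x), (forall x, J (J x) = - x),
          (forall x, K (K x) = - x) & (forall x, I (J (K x)) = - x)]].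

Definition hypercomplex (I J K : V -> V) : Prop :=
  almost_hypercomplex I J K /\
  [/\ [/\ nij_zero I I, nij_zero J J & nij_zero K K] &
      [/\ nij_zero I J, nij_zero J K & nij_zero K I]].

End Defs.

(* Main.v *)
Require Import Defs.
From HB Require Import structures.
From mathcomp Require Import all_boot all_order all_algebra.
Set Implicit Arguments. Unset Strict Implicit. Unset Printing Implicit Defensive.
Import Order.TTheory GRing.Theory Num.Theory.
Local Open Scope ring_scope.

Inductive zex := ZAt of nat | ZAd of zex & zex | ZOp of zex | ZZe.

Section Refl.
Variable V : zmodType.
Fixpoint zeval (env : seq V) (e : zex) : V :=
  match e with
  | ZAt n => nth 0 env n
  | ZAd a b => zeval env a + zeval env b
  | ZOp a => - zeval env a
  | ZZe => 0
  end.
Fixpoint addv (u v : seq int) : seq int :=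
  match u, v with
  | [::], _ => v
  | _, [::] => u
  | a :: u', c :: v' => (a + c) :: addv u' v'
  end.
Fixpoint zunit (n : nat) : seq int := if n is n'.+1 then 0 :: zunit n' else [:: 1].
Fixpoint znorm (e : zex) : seq int :=
  match e with
  | ZAt n => zunit n
  | ZAd a b => addv (znorm a) (znorm b)
  | ZOp a => map (fun z => - z) (znorm a)
  | ZZe => [::]
  end.
Fixpoint evalv (env : seq V) (v : seq int) : V :=
  match v with
  | [::] => 0
  | c :: v' => (head 0 env) *~ c + evalv (behead env) v'
  end.
Lemma evalv_add env u v : evalv env (addv u v) = evalv env u + evalv env v.
Proof.
elim: u env v => [|a u IH] env [|c v] /=; rewrite ?add0r ?addr0 //.
by rewrite IH mulrzDr addrACA.
Qed.
Lemma evalv_opp env u : evalv env (map (fun z => - z) u) = - evalv env u.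
Proof. by elim: u env => [|a u IH] env /=; rewrite ?oppr0 // IH mulrNz opprD. Qed.
Lemma evalv_unit env n : evalv env (zunit n) = nth 0 env n.
Proof.
elim: n env => [|n IH] env /=; first by case: env => [|x e] /=; rewrite addr0.
by rewrite IH mulr0z add0r; case: env => [|x e] //=; rewrite nth_nil.
Qed.
Lemma znorm_ok env e : zeval env e = evalv env (znorm e).
Proof.
elim: e => [n|a IHa b IHb|a IHa|] /=.
- by rewrite evalv_unit.
- by rewrite evalv_add IHa IHb.
- by rewrite evalv_opp IHa.
- by [].
Qed.
Lemma evalv0 env v : all (fun z => z == 0) v -> evalv env v = 0.
Proof.
elim: v env => [|a v IH] env //= /andP[/eqP -> h].
by rewrite mulr0z add0r IH.
Qed.
Lemma zsound env e : all (fun z => z == 0) (znorm e) -> zeval env e = 0.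
Proof. by move=> h; rewrite znorm_ok evalv0. Qed.
End Refl.

Ltac zmem x env :=
  lazymatch env with
  | nil => constr:(false)
  | cons x _ => constr:(true)
  | cons _ ?t => zmem x t
  end.
Ltac zatoms t env :=
  lazymatch t with
  | @GRing.add _ ?a ?b => let e1 := zatoms a env in zatoms b e1
  | @GRing.opp _ ?a => zatoms a env
  | @GRing.zero _ => env
  | _ => let m := zmem t env in
         lazymatch m with true => env | false => constr:(cons t env) end
  end.
Ltac zidx x env :=
  lazymatch env with
  | cons x _ => constr:(0%N)
  | cons _ ?t => let k := zidx x t in constr:(S k)
  end.
Ltac zreify t env :=
  lazymatch t with
  | @GRing.add _ ?a ?b => let e1 := zreify a env in let e2 := zreify b env in constr:(ZAd e1 e2)
  | @GRing.opp _ ?a => let e1 := zreify a env in constr:(ZOp e1)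
  | @GRing.zero _ => constr:(ZZe)
  | _ => let k := zidx t env in constr:(ZAt k)
  end.
Ltac zsolve :=
  lazymatch goal with
  | |- ?t = 0 =>
    let V := type of t in
    let env0 := constr:(@nil V) in
    let env := zatoms t env0 in
    let e := zreify t env in
    change (zeval env e = 0); apply: zsound; vm_compute; reflexivity
  end.


Section Formal.
Variables (V : zmodType) (b : V -> V -> V) (I J : V -> V).
Hypotheses (bDl : forall x y z, b (x + y) z = b x z + b y z)
  (bNl : forall x z, b (- x) z = - b x z) (b0l : forall z, b 0 z = 0)
  (bDr : forall x y z, b z (x + y) = b z x + b z y)
  (bNr : forall x z, b z (- x) = - b z x) (b0r : forall z, b z 0 = 0)
  (IA : forall x y, I (x + y) = I x + I y) (IN : forall x, I (- x) = - I x) (I0 : I 0 = 0)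
  (JA : forall x y, J (x + y) = J x + J y) (JN : forall x, J (- x) = - J x) (J0 : J 0 = 0)
  (II : forall x, I (I x) = - x) (JJ : forall x, J (J x) = - x)
  (JI : forall x, J (I x) = - I (J x)).

Definition nij (F G : V -> V) (X Y : V) : V :=
  b (F X) (G Y) - F (b X (G Y)) - G (b (F X) Y) + F (G (b X Y))
  + b (G X) (F Y) - G (b X (F Y)) - F (b (G X) Y) + G (F (b X Y)).

Hypotheses (nII : forall X Y, nij I I X Y = 0) (nJJ : forall X Y, nij J J X Y = 0).

Lemma subh (T E : V) : E = 0 -> T - E = 0 -> T = 0.
Proof. by move=> -> ; rewrite subr0. Qed.
Lemma addh (T E : V) : E = 0 -> T + E = 0 -> T = 0.
Proof. by move=> -> ; rewrite addr0. Qed.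
Lemma lift (F : V -> V) (E : V) : F 0 = 0 -> E = 0 -> F E = 0.
Proof. by move=> h ->. Qed.

Ltac nrm := rewrite /nij /=;
  rewrite ?(IA, IN, I0, JA, JN, J0, bDl, bNl, b0l, bDr, bNr, b0r, II, JJ, JI, opprK, oppr0).

Lemma KK X Y : let K := fun x => I (J x) in nij K K X Y + nij K K X Y = 0.
Proof.
move=> K.
apply: (subh (nII X Y)).
apply: (addh (lift J0 (nII X (J Y)))).
apply: (addh (lift J0 (nII (J X) Y))).
apply: (subh (nII (J X) (J Y))).
apply: (subh (nJJ X Y)).
apply: (addh (lift I0 (nJJ X (I Y)))).
apply: (addh (lift I0 (nJJ (I X) Y))).
apply: (subh (nJJ (I X) (I Y))).
rewrite /K; nrm; zsolve.
Qed.

Lemma JK X Y : let K := fun x => I (J x) in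
  nij J K X Y + nij J K X Y + nij J K X Y + nij J K X Y = 0.
Proof.
move=> K.
apply: (addh (lift I0 (nII X Y))).
apply: (subh (lift I0 (lift J0 (nII X (J Y))))).
apply: (subh (lift I0 (lift J0 (nII (J X) Y)))).
apply: (subh (lift I0 (nII (J X) (J Y)))).
apply: (subh (lift I0 (nJJ X Y))).
apply: (addh (nJJ X (I Y))).
apply: (addh (nJJ (I X) Y)).
apply: (addh (lift I0 (nJJ (I X) (I Y)))).
rewrite /K; nrm; zsolve.
Qed.

Lemma KI X Y : let K := fun x => I (J x) in
  nij K I X Y + nij K I X Y + nij K I X Y + nij K I X Y = 0.
Proof.
move=> K.
apply: (addh (lift J0 (nII X Y))).
apply: (subh (nII X (J Y))).
apply: (subh (nII (J X) Y)).
apply: (subh (lift J0 (nII (J X) (J Y)))).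
apply: (subh (lift J0 (nJJ X Y))).
apply: (subh (lift I0 (lift J0 (nJJ X (I Y))))).
apply: (subh (lift I0 (lift J0 (nJJ (I X) Y)))).
apply: (addh (lift J0 (nJJ (I X) (I Y)))).
rewrite /K; nrm; zsolve.
Qed.
End Formal.

Lemma half2 (R : realFieldType) (C : comAlgType R) (V : lmodType C) (T : V) :
  T + T = 0 -> T = 0.
Proof.
move=> h; have := congr1 (fun t => ((2%:R : R)^-1)%:A *: t) h.
rewrite scaler0 scalerDr -scalerDl -scalerDl => <-.
have -> : (2%:R : R)^-1 + (2%:R)^-1 = 1.
  by rewrite -mulr2n -[_ *+ 2]mulr_natr mulVf // pnatr_eq0.
by rewrite !scale1r.
Qed.

Lemma half4 (R : realFieldType) (C : comAlgType R) (V : lmodType C) (T : V) :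
  T + T + T + T = 0 -> T = 0.
Proof. by move=> h; apply: (half2 (R:=R)); apply: (half2 (R:=R)); rewrite -h !addrA. Qed.

Theorem mainTheorem10 (R : realFieldType) (C : comAlgType R) (V : lmodType C)
  (c : courant_data V) (hc : courant_axioms c) (I J : V -> V) :
  bundle_endo I -> bundle_endo J ->
  (forall x, I (I x) = - x) -> (forall x, J (J x) = - x) ->
  (forall x, I (J x) = - J (I x)) ->
  ca_orthogonal c I -> ca_orthogonal c J ->
  nij_zero c I I -> nij_zero c J J -> nij_zero c I J ->
  hypercomplex c I J (fun x => I (J x)).
Proof.
move=> eI eJ II JJ IJ oI oJ nII nJJ nIJ.
case: hc => _ [_ [_ [_ [_ [_ [h7 [h8 _]]]]]]].
have bDl : forall x y z, dorf c (x + y) z = dorf c x z + dorf c y z.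
  by move=> x y z; have := h7 1 x y z; rewrite !scale1r.
have bDr : forall x y z, dorf c z (x + y) = dorf c z x + dorf c z y.
  by move=> x y z; have := h8 1 z x y; rewrite !scale1r.
have b0l : forall z, dorf c 0 z = 0.
  move=> z; have := bDl 0 0 z; rewrite addr0 => h.
  by have := congr1 (fun t => t - dorf c 0 z) h; rewrite subrr addrK.
have b0r : forall z, dorf c z 0 = 0.
  move=> z; have := bDr 0 0 z; rewrite addr0 => h.
  by have := congr1 (fun t => t - dorf c z 0) h; rewrite subrr addrK.
have bNl : forall x z, dorf c (- x) z = - dorf c x z.
  by move=> x z; have := h7 (-1) x 0 z; rewrite addr0 b0l addr0 !scaleN1r ?scale1r.
have bNr : forall x z, dorf c z (- x) = - dorf c z x.
  by move=> x z; have := h8 (-1) z x 0; rewrite addr0 b0r addr0 !scaleN1r ?scale1r.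
have IA : forall x y, I (x + y) = I x + I y by move=> x y; rewrite -[x]scale1r eI !scale1r.
have JA : forall x y, J (x + y) = J x + J y by move=> x y; rewrite -[x]scale1r eJ !scale1r.
have I0 : I 0 = 0.
  have := IA 0 0; rewrite addr0 => h.
  by have := congr1 (fun t => t - I 0) h; rewrite subrr addrK.
have J0 : J 0 = 0.
  have := JA 0 0; rewrite addr0 => h.
  by have := congr1 (fun t => t - J 0) h; rewrite subrr addrK.
have IN : forall x, I (- x) = - I x.
  by move=> x; apply/eqP; rewrite -addr_eq0 -IA addNr I0.
have JN : forall x, J (- x) = - J x.
  by move=> x; apply/eqP; rewrite -addr_eq0 -JA addNr J0.
have JI : forall x, J (I x) = - I (J x) by move=> x; rewrite IJ opprK.
have nII' : forall X Y, nij (dorf c) I I X Y = 0 by exact: nII.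
have nJJ' : forall X Y, nij (dorf c) J J X Y = 0 by exact: nJJ.
have KK' := KK bNl bNr IA IN I0 JA JN J0 II JJ JI nII' nJJ'.
have JK' := JK bNl bNr IA IN I0 JA JN J0 II JJ JI nII' nJJ'.
have KI' := KI bNl bNr IA IN I0 JA JN J0 II JJ JI nII' nJJ'.
split; last split.
- split; split.
  + exact: eI.
  + exact: eJ.
  + by move=> f x y; rewrite eJ eI.
  + exact: oI.
  + exact: oJ.
  + by move=> x y; rewrite oI oJ.
  + exact: II.
  + exact: JJ.
  + by move=> x; rewrite JI IN II opprK.
  + by move=> x; rewrite JI IN II opprK.
- split.
  + exact: nII.
  + exact: nJJ.
  + by move=> X Y; apply: (half2 (R:=R)); apply: KK'.
- split.
  + exact: nIJ.
  + by move=> X Y; apply: (half4 (R:=R)); apply: JK'.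
  + by move=> X Y; apply: (half4 (R:=R)); apply: KI'.
Qed.
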